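(* Let $n\geq 2$, $\sigma\in S_n$ and $I\sqcup J=[2,n]$. If $A^\sigma_{[2,n],\emptyset}=A^{\mathrm{id}}_{I,J}$, then $A^{\rho\sigma}_{[2,n],\emptyset}=A^{\rho}_{I,J}$ for every $\rho\in S_n$.
   Context: Let $w_{ij}$, $1\leq i,j\leq n$, be formal variables subject only to $w_{ij}+w_{ji}=0$. Let $[2,n]=\{2,\dots,n\}$. For $\sigma\in S_n$ and a disjoint decomposition $I\sqcup J=[2,n]$, set $$A^\sigma_{I,J}:=\sum_{i\in I}\sum_{\ell=1}^{i-1}w_{\sigma(\ell)\sigma(i)}-\sum_{j\in J}\sum_{\ell=1}^{j-1}w_{\sigma(\ell)\sigma(j)}.$$ Permutations are composed right-to-left: $(\rho\sigma)(k)=\rho(\sigma(k))$. *)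

(* Defs.v *)
From mathcomp Require Import all_boot all_order all_algebra all_fingroup.
Set Implicit Arguments. Unset Strict Implicit. Unset Printing Implicit Defensive.
Import GRing.Theory.
Local Open Scope ring_scope.

(* Formal variables w_ij (indices 0..n-1 stand for 1..n), subject only to
   w_ij + w_ji = 0.  We model the free abelian group they generate by
   integer vectors indexed by ordered pairs: w_ij := e_(i,j) - e_(j,i).
   For i <> j this identifies the Z-span of {w_ij} with the free abelian
   group on {w_ij : i < j}, i.e. exactly the relations w_ij + w_ji = 0. *)
Definition wexpr (n : nat) := {ffun 'I_n * 'I_n -> int}.

Definition wvar (n : nat) (i j : 'I_n) : wexpr n :=
  [ffun p => ((p == (i, j))%:R - (p == (j, i))%:R)%R].

(* A^sigma_{I,J} = sum_{i in I} sum_{l < i} w_{sigma l, sigma i}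
                 - sum_{j in J} sum_{l < j} w_{sigma l, sigma j}
   (0-based indices; [2,n] becomes {i | 0 < i}). *)
Definition Aexpr (n : nat) (s : {perm 'I_n}) (I J : {set 'I_n}) : wexpr n :=
  (\sum_(i in I) \sum_(l < n | (l < i)%N) wvar (s l) (s i))
  - (\sum_(j in J) \sum_(l < n | (l < j)%N) wvar (s l) (s j)).

Definition two_n (n : nat) : {set 'I_n} := [set i : 'I_n | (0 < i)%N].

(* Main.v *)
Require Import Defs.
From mathcomp Require Import all_boot all_order all_algebra all_fingroup.
Import GRing.Theory.
Local Open Scope ring_scope.

Definition relabel {n} (r : {perm 'I_n}) (f : wexpr n) : wexpr n :=
  [ffun p : 'I_n * 'I_n => f ((r^-1)%g p.1, (r^-1)%g p.2)].

Lemma eqpair {n} (r : {perm 'I_n}) (a b : 'I_n) (p : 'I_n * 'I_n) :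
  (p == (r a, r b)) = (((r^-1)%g p.1, (r^-1)%g p.2) == (a, b)).
Proof.
case: p => x y /=; rewrite !xpair_eqE.
by rewrite -[x == r a](inj_eq (@perm_inj _ (r^-1)%g)) -[y == r b](inj_eq (@perm_inj _ (r^-1)%g)) !permK.
Qed.

Lemma Aexpr_relabel n (s r : {perm 'I_n}) I J :
  Aexpr (s * r)%g I J = relabel r (Aexpr s I J).
Proof.
apply/ffunP => p; rewrite /Aexpr /relabel !ffunE /= !sum_ffunE.
congr (_ - _); apply: eq_bigr => i _; rewrite !sum_ffunE;
  apply: eq_bigr => l _; rewrite !ffunE !permM !eqpair.
- by [].
- by [].
Qed.

(* Note: in mathcomp, (s * r)%g x = r (s x), so rho \o sigma is (sigma * rho)%g. *)
Theorem lemma3p6 (n : nat) (hn : (2 <= n)%N) (sigma : {perm 'I_n})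
  (I J : {set 'I_n}) (hdisj : [disjoint I & J]) (hcov : I :|: J = two_n n) :
  Aexpr sigma (two_n n) set0 = Aexpr 1%g I J ->
  forall rho : {perm 'I_n}, Aexpr (sigma * rho)%g (two_n n) set0 = Aexpr rho I J.
Proof.
move=> H rho; rewrite Aexpr_relabel H -Aexpr_relabel mul1g //.
Qed.
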